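(* Let $(X,\tau)$ be a kd-space and let $A\subseteq X$ be locally dense, i.e. $A\subseteq \mathrm{Int}(\mathrm{Cl}(A))$. Then the subspace $(A,\tau|A)$ is a kd-space.
   Context: A space is a kd-space if every compact subset is $\delta$-closed. In a space $Y$, a set $U$ is regular open if $U=\mathrm{Int}(\mathrm{Cl}(U))$; a point $x$ is a $\delta$-cluster point of $B\subseteq Y$ if $B\cap U\neq\emptyset$ for every regular open $U\ni x$; $B$ is $\delta$-closed if it contains all its $\delta$-cluster points. *)

(* Defs.v *)
From HB Require Import structures.
From mathcomp Require Import all_boot all_order all_algebra.
From mathcomp Require Import all_classical all_reals all_analysis.
Set Implicit Arguments.
Unset Strict Implicit.
Unset Printing Implicit Defensive.
Local Open Scope classical_set_scope.

Definition regular_open {Y : topologicalType} (U : set Y) : Prop :=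
  U = interior (closure U).

Definition delta_cluster {Y : topologicalType} (B : set Y) (x : Y) : Prop :=
  forall U : set Y, regular_open U -> U x -> B `&` U !=set0.

Definition delta_closed {Y : topologicalType} (B : set Y) : Prop :=
  forall x : Y, delta_cluster B x -> B x.

Definition kd_space (Y : topologicalType) : Prop :=
  forall K : set Y, compact K -> delta_closed K.

Definition subspace_of {X : topologicalType} (A : set X) : topologicalType :=
  initial_topology (@sval X (fun x => x \in A)).

(* Main.v *)
Require Import Defs.
From HB Require Import structures.
From mathcomp Require Import all_boot all_order all_algebra.
From mathcomp Require Import all_classical all_reals all_analysis.
Local Open Scope classical_set_scope.

Lemma interiorP' {T : topologicalType} (B : set T) x :
  interior B x <-> exists O : set T, [/\ open O, O x & O `<=` B].
Proof.
rewrite /interior /= nbhsE /=; split.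
  by case=> O [oO Ox] OB; exists O.
by case=> O [oO Ox OB]; exists O.
Qed.

Lemma closureP' {T : topologicalType} (B : set T) x :
  closure B x <-> forall O : set T, open O -> O x -> B `&` O !=set0.
Proof.
split.
  by move=> H O oO Ox; apply: H; apply: open_nbhs_nbhs.
move=> H N; rewrite nbhsE; case=> O [oO Ox] ON.
by have [y [By Oy]] := H O oO Ox; exists y; split => //; apply: ON.
Qed.

Theorem mainTheorem5 (X : topologicalType) (A : set X) :
  kd_space X -> A `<=` interior (closure A) -> kd_space (subspace_of A).
Proof.
move=> kdX Aloc K cK a Hc.
pose f := (@sval X (fun x => x \in A)).
have fc : continuous (f : subspace_of A -> X) := @initial_continuous _ _ f.
have cK' : compact (f @` K).
  apply: continuous_compact => //; exact: continuous_subspaceT.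
suff : delta_cluster (f @` K) (f a).
  move=> /(kdX _ cK') [z Kz] /eqP; rewrite /f -/(val z) -/(val a) val_eqE.
  by move/eqP => <-.
move=> U rU Ua.
have oU : open U by rewrite rU; exact: open_interior.
pose V : set (subspace_of A) := f @^-1` U.
have oV : open V by exists U.
suff rV : regular_open V.
  have [z [Kz Vz]] := Hc V rV Ua.
  by exists (f z); split => //; exists z.
rewrite /regular_open; apply/seteqP; split => x.
  move=> Vx; apply/interiorP'; exists V; split => //; exact: subset_closure.
move=> /interiorP' [OS [HOS OSx OSc]]; case: HOS => O oO HO; subst OS.
change (U (f x)); rewrite rU; apply/interiorP'.
exists (O `&` interior (closure A)); split.
- by apply: openI => //; exact: open_interior.
- split => //; apply: Aloc; rewrite /f; exact: (set_mem (proj2_sig x)).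
- move=> y [Oy Wy]; apply/closureP' => P oP Py.
  have yA : closure A y by apply: interior_subset.
  have [z [Az [Pz Oz]]] := (proj1 (closureP' _ _) yA) (P `&` O) (openI oP oO) (conj Py Oy).
  pose zs : subspace_of A := exist _ z (mem_set Az).
  have czs : closure V zs by apply: OSc.
  have oP' : open (f @^-1` P : set (subspace_of A)) by exists P.
  have [w [Vw Pw]] := (proj1 (closureP' _ _) czs) _ oP' Pz.
  by exists (f w).
Qed.
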